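(* Consider the flat-pricing market described in the context, and assume the network cost coefficient satisfies $\eta<\big(\kappa_{\mathrm{avg}}\,\Phi_{\max}^{1-\theta}\big)^{-1}$. Then: (i) $R(p)$ is unimodal on $[0,p_{\max})$ (i.e., there is $v$ such that $R$ is monotonically increasing for $p\le v$ and monotonically decreasing for $p\ge v$), and the feasible price set $\mathcal P$ is non-empty and connected. (ii) If $R'(p_0)<0$, then the network is opt-saturated and the unique equilibrium price is $p^\star=p_0$, where $$p_0=\Phi_{\max}^{\theta}\left(1-\frac{C_{3g}}{\kappa_{\mathrm{peak}}\,\hat N\,\mathbb E[\Phi]}\right)^{\frac{\theta}{2-\sigma}},\qquad \mathbb E[\Phi]=\tfrac{1-\sigma}{2-\sigma}\Phi_{\max}.$$ (iii) If $R'(p_0)>0$, then the network is opt-unsaturated and the unique equilibrium price $p^\star=p^\star(\kappa_{\mathrm{avg}})$ is the unique solution of $R'(p)=0$ in $(0,p_{\max})$; moreover, viewing $\kappa_{\mathrm{avg}}$ as a variable, $\frac{\partial p^\star(\kappa_{\mathrm{avg}})}{\partial \kappa_{\mathrm{avg}}}>0$.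
   Context: Market model (single cell). There are $\hat N$ users (treated as a continuum of mass $\hat N$) in one base-station cell with capacity $C_{3g}>0$ (traffic volume per time slot), and time slots $t\in T=\{1,\dots,|T|\}$. Each user's daily traffic demand $\Phi$ is random with density $f_\Phi(x)=x^{-\sigma}/Z$ for $0\le x\le\Phi_{\max}$, where $0<\sigma<1$ and $Z=\Phi_{\max}^{1-\sigma}/(1-\sigma)$. All users share a temporal preference $w(t)\ge 0$ with $\sum_{t\in T}w(t)=1$; a user with demand $\Phi$ has per-slot demand $\phi(t)=w(t)\Phi$. The willingness to pay is $\gamma(t)=w(t)^{1-\theta}$ with price sensitivity $\theta\in(0,1)$; a user sending volumes $x(t)\le\phi(t)$ and paying $m$ gets net-utility $\sum_{t}\gamma(t)x(t)^\theta-m$. Offloading indicators: constants $\kappa_{\mathrm{avg}},\kappa_{\mathrm{peak}}\in(0,1]$ (independent of price) such that, if $X_{\rm tot}=\sum_t X(t)$ is the total (cellular+WiFi) traffic sent in the cell in a day, then the total daily cellular (3G) traffic is $\kappa_{\mathrm{avg}}X_{\rm tot}$ and the peak per-slot cellular traffic is $\kappa_{\mathrm{peak}}X_{\rm tot}$. Flat pricing with fee $p\ge0$: a user subscribes iff its net-utility $\Phi^\theta-p$ is positive, i.e. iff $\Phi>p^{1/\theta}$, and a subscriber sends its whole demand, $x(t)=\phi(t)$. Let $p_{\max}=\Phi_{\max}^\theta$ (no subscribers for $p\ge p_{\max}$). The provider's revenue (income minus linear cellular cost with coefficient $\eta>0$ per unit of cellular traffic) is, for $0\le p<p_{\max}$,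 $$R(p)=\hat N\int_{p^{1/\theta}}^{\Phi_{\max}}\big(p-\eta\kappa_{\mathrm{avg}}\Phi\big)f_\Phi(\Phi)\,d\Phi,$$ and $R(p)=0$ for $p\ge p_{\max}$. The peak cellular traffic is $A(p)=\kappa_{\mathrm{peak}}\hat N\int_{p^{1/\theta}}^{\Phi_{\max}}\Phi f_\Phi(\Phi)\,d\Phi$. Feasible price set: $\mathcal P=\{p: R(p)>0,\ A(p)\le C_{3g}\}$; threshold price $p_0=\inf\mathcal P$. An equilibrium price is any $p^\star\in\arg\max_{p\in\mathcal P}R(p)$. The network is saturated at $p$ if $A(p)=C_{3g}$; for a unique equilibrium price $p^\star$, the network is called opt-saturated if it is saturated at $p^\star$ and opt-unsaturated otherwise. *)

(* Defs.v *)
From Stdlib Require Import Reals.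
Open Scope R_scope.

(* Real power with the convention x^y = 0 for x <= 0 (only used with y > 0,
   where it is the continuous extension: 0^y = 0). *)
Definition rpow (x y : R) : R := if Rlt_dec 0 x then Rpower x y else 0.

Definition pmax (M theta : R) : R := rpow M theta.

(* E[Phi] for the density f(x) = x^{-sigma}/Z on [0, M] *)
Definition meanPhi (sigma M : R) : R := (1 - sigma) / (2 - sigma) * M.

(* Closed forms of the integrals of the density, for 0 <= a <= M:
   tailProb a = int_a^M f_Phi(x) dx = 1 - (a/M)^{1-sigma}
   tailMean a = int_a^M x f_Phi(x) dx
              = (1-sigma)/(2-sigma) * (M^{2-sigma} - a^{2-sigma}) / M^{1-sigma} *)
Definition tailProb (sigma M a : R) : R :=
  1 - rpow a (1 - sigma) / rpow M (1 - sigma).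
Definition tailMean (sigma M a : R) : R :=
  (1 - sigma) / (2 - sigma) * (rpow M (2 - sigma) - rpow a (2 - sigma))
    / rpow M (1 - sigma).

(* Revenue R(p) = N int_{p^{1/theta}}^{M} (p - eta kavg Phi) f(Phi) dPhi
   for p < p_max, and 0 for p >= p_max. *)
Definition revenue (N sigma theta M eta kavg p : R) : R :=
  if Rlt_dec p (pmax M theta) then
    N * (p * tailProb sigma M (rpow p (1 / theta))
         - eta * kavg * tailMean sigma M (rpow p (1 / theta)))
  else 0.

(* Peak cellular traffic A(p) = kpeak N int_{p^{1/theta}}^{M} Phi f(Phi) dPhi
   (no subscribers, hence 0, for p >= p_max). *)
Definition peak (N sigma theta M kpeak p : R) : R :=
  if Rlt_dec p (pmax M theta) then
    kpeak * N * tailMean sigma M (rpow p (1 / theta))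
  else 0.

Definition feasible (N C sigma theta M eta kavg kpeak p : R) : Prop :=
  revenue N sigma theta M eta kavg p > 0 /\ peak N sigma theta M kpeak p <= C.

Definition is_glb (S : R -> Prop) (x : R) : Prop :=
  (forall y, S y -> x <= y) /\ (forall z, (forall y, S y -> z <= y) -> z <= x).

Definition equilibrium (N C sigma theta M eta kavg kpeak p : R) : Prop :=
  feasible N C sigma theta M eta kavg kpeak p /\
  forall q, feasible N C sigma theta M eta kavg kpeak q ->
    revenue N sigma theta M eta kavg q <= revenue N sigma theta M eta kavg p.

Definition unique_equilibrium (N C sigma theta M eta kavg kpeak p : R) : Prop :=
  equilibrium N C sigma theta M eta kavg kpeak p /\
  forall q, equilibrium N C sigma theta M eta kavg kpeak q -> q = p.

(* Main.v *)
Require Import Defs.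
From Stdlib Require Import Reals Lra Lia Psatz Ranalysis5 ClassicalEpsilon.
Open Scope R_scope.

Lemma dpl_loc (f g : R -> R) a b x l : a < x < b -> (forall y, a < y < b -> f y = g y) ->
  derivable_pt_lim g x l -> derivable_pt_lim f x l.
Proof.
  intros Hx Hfg Hg eps Heps. destruct (Hg eps Heps) as [d Hd].
  assert (Hp : 0 < Rmin d (Rmin (x - a) (b - x))).
  { apply Rmin_pos; [apply cond_pos| apply Rmin_pos; lra]. }
  exists (mkposreal _ Hp). intros h hnz hlt. simpl in hlt.
  assert (h1 := Rmin_l d (Rmin (x - a) (b - x))).
  assert (h2 := Rmin_r d (Rmin (x - a) (b - x))).
  assert (h3 := Rmin_l (x - a) (b - x)). assert (h4 := Rmin_r (x - a) (b - x)).
  apply Rabs_def2 in hlt as [hl1 hl2].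
  rewrite (Hfg (x + h)) by lra. rewrite (Hfg x) by lra.
  apply Hd; auto. apply Rabs_def1; lra.
Qed.

Lemma rp_deriv e x : 0 < x -> derivable_pt_lim (fun y => Rpower y e) x (e * Rpower x (e - 1)).
Proof. intros; apply derivable_pt_lim_power; auto. Qed.

Lemma dlin2 f g a b c x l1 l2 : derivable_pt_lim f x l1 -> derivable_pt_lim g x l2 ->
  derivable_pt_lim (fun y => a + b * f y + c * g y) x (b * l1 + c * l2).
Proof.
  intros H1 H2.
  replace (b * l1 + c * l2) with (0 + b * l1 + c * l2) by ring.
  apply (derivable_pt_lim_plus (fun y => a + b * f y) (fun y => c * g y)).
  apply (derivable_pt_lim_plus (fun _ => a) (fun y => b * f y)).
  apply derivable_pt_lim_const. apply derivable_pt_lim_scal; auto.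
  apply derivable_pt_lim_scal; auto.
Qed.

Lemma rp_pos x e : 0 < Rpower x e.
Proof. unfold Rpower; apply exp_pos. Qed.

Lemma rp_lt_base x y e : 0 < x -> x < y -> 0 < e -> Rpower x e < Rpower y e.
Proof. intros; apply Rlt_Rpower_l; lra. Qed.

Lemma rp_le_base x y e : 0 < x -> x <= y -> 0 <= e -> Rpower x e <= Rpower y e.
Proof. intros; apply Rle_Rpower_l; lra. Qed.

Lemma rp_lt_exp x e1 e2 : 0 < x -> x < 1 -> e1 < e2 -> Rpower x e2 < Rpower x e1.
Proof.
  intros. unfold Rpower. apply exp_increasing.
  assert (ln x < 0). { rewrite <- ln_1. apply ln_increasing; lra. } nra.
Qed.

Definition Dg al g A B p := 1 + (-(1+al)/A) * Rpower p al + (B/A) * Rpower p g.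
Definition Sg al g B p := B*g*Rpower p (g-al) - (1+al)*al.

Lemma Dg_der al g A B p : 0 < p -> 0 < A ->
  derivable_pt_lim (Dg al g A B) p (Rpower p (al-1)/A * Sg al g B p).
Proof.
  intros Hp HA. unfold Dg.
  replace (Rpower p (al-1)/A * Sg al g B p) with
    ((-(1+al)/A) * (al * Rpower p (al - 1)) + (B/A) * (g * Rpower p (g - 1))).
  apply dlin2; apply rp_deriv; auto.
  unfold Sg. replace (g - 1) with ((al - 1) + (g - al)) by ring.
  rewrite Rpower_plus. field. lra.
Qed.

Lemma Sg_incr al g B x y : 0 < x -> x < y -> al < g -> 0 < B -> 0 < g ->
  Sg al g B x < Sg al g B y.
Proof.
  intros. unfold Sg. assert (Rpower x (g-al) < Rpower y (g-al)) by (apply rp_lt_base; lra).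
  assert (0 < B*g) by nra. nra.
Qed.

Lemma Dg_dec al g A B x y : 0 < A -> 0 < x -> x < y -> al < g -> 0 < B -> 0 < g ->
  Sg al g B y <= 0 -> Dg al g A B y < Dg al g A B x.
Proof.
  intros. destruct (MVT_cor2 (Dg al g A B) (fun c => Rpower c (al-1)/A * Sg al g B c) x y)
    as [c [Hc1 Hc2]]; auto.
  intros c Hc; apply Dg_der; lra.
  assert (Sg al g B c < Sg al g B y) by (apply Sg_incr; lra).
  assert (0 < Rpower c (al-1)/A) by (apply Rdiv_lt_0_compat; auto; apply rp_pos).
  assert (Rpower c (al-1)/A * Sg al g B c < 0) by nra. nra.
Qed.

Lemma Dg_inc al g A B x y : 0 < A -> 0 < x -> x < y -> al < g -> 0 < B -> 0 < g ->
  0 <= Sg al g B x -> Dg al g A B x < Dg al g A B y.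
Proof.
  intros. destruct (MVT_cor2 (Dg al g A B) (fun c => Rpower c (al-1)/A * Sg al g B c) x y)
    as [c [Hc1 Hc2]]; auto.
  intros c Hc; apply Dg_der; lra.
  assert (Sg al g B x < Sg al g B c) by (apply Sg_incr; lra).
  assert (0 < Rpower c (al-1)/A) by (apply Rdiv_lt_0_compat; auto; apply rp_pos).
  assert (0 < Rpower c (al-1)/A * Sg al g B c) by nra. nra.
Qed.

Lemma shape al g A B P : 0 < al -> al < g -> 0 < A -> 0 < B -> 0 < P ->
  Dg al g A B P < 0 ->
  exists z, 0 < z < P /\ Dg al g A B z = 0 /\
    (forall p, 0 < p < z -> 0 < Dg al g A B p) /\
    (forall p, z < p <= P -> Dg al g A B p < 0) /\ Sg al g B z < 0.
Proof.
  intros Hal Hg HA HB HP HDP.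
  set (w := Rpower (A/(2*(1+al))) (/al)).
  assert (Hw : 0 < w) by apply rp_pos.
  set (e := Rmin (P/2) w).
  assert (He : 0 < e) by (apply Rmin_pos; lra).
  assert (HeP : e < P) by (assert (Rmin (P/2) w <= P/2) by apply Rmin_l; unfold e; lra).
  assert (HDe : 0 < Dg al g A B e).
  { unfold Dg. assert (Rpower e al <= Rpower w al).
    { apply rp_le_base; auto; [apply Rmin_r|lra]. }
    unfold w in H. rewrite Rpower_mult in H.
    replace (/al * al) with 1 in H by (field; lra).
    rewrite Rpower_1 in H by (apply Rdiv_lt_0_compat; lra).
    assert (0 < B/A * Rpower e g) by (apply Rmult_lt_0_compat; [apply Rdiv_lt_0_compat; auto| apply rp_pos]).
    assert ((1+al)/A * Rpower e al <= (1+al)/A * (A / (2 * (1 + al)))).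
    { apply Rmult_le_compat_l; auto. apply Rlt_le, Rdiv_lt_0_compat; lra. }
    replace ((1+al)/A * (A / (2 * (1 + al)))) with (/2) in H1 by (field; lra).
    replace (-(1+al)/A) with (-((1+al)/A)) by (field; lra). lra. }
  destruct (IVT_interv (fun p => - Dg al g A B p) e P) as [z [Hz1 Hz2]]; auto; try lra.
  { intros a Ha. apply continuity_pt_opp. apply derivable_continuous_pt.
    exists (Rpower a (al-1)/A * Sg al g B a). apply Dg_der; lra. }
  assert (Hz0 : Dg al g A B z = 0) by lra.
  assert (HzP : z < P) by (destruct (Req_dec z P); [subst; lra| lra]).
  assert (HSz : Sg al g B z < 0).
  { destruct (Rlt_or_le (Sg al g B z) 0) as [h|h]; auto.
    assert (Dg al g A B z < Dg al g A B P) by (apply Dg_inc; lra). lra. }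
  exists z. split; [lra|]. split; auto. split; [|split]; auto.
  - intros p Hp. assert (Dg al g A B z < Dg al g A B p) by (apply Dg_dec; lra). lra.
  - intros p Hp. destruct (Rle_or_lt (Sg al g B p) 0) as [h|h].
    + assert (Dg al g A B p < Dg al g A B z) by (apply Dg_dec; lra). lra.
    + destruct (Req_dec p P) as [->|hne]; auto.
      assert (Dg al g A B p < Dg al g A B P) by (apply Dg_inc; lra). lra.
Qed.

Definition al s t := (1-s)/t.
Definition gg s t := (2-s)/t - 1.
Definition AA s M := Rpower M (1-s).
Definition A2 s M := Rpower M (2-s).
Definition PP t M := Rpower M t.
Definition cc s := (1-s)/(2-s).
Definition BB s t eta k := eta*k*cc s*(gg s t+1).
Definition Fk s t M eta k p := p - Rpower p (1+al s t)/AA s M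
   - eta*k*cc s*(A2 s M - Rpower p (gg s t+1))/AA s M.
Definition Dk s t M eta k := Dg (al s t) (gg s t) (AA s M) (BB s t eta k).
Definition Sk s t eta k := Sg (al s t) (gg s t) (BB s t eta k).

Lemma pmax_eq M t : 0 < M -> pmax M t = PP t M.
Proof. intros; unfold pmax, rpow, PP; destruct (Rlt_dec 0 M); [auto|lra]. Qed.

Lemma rpow_pos x e : 0 < x -> rpow x e = Rpower x e.
Proof. intros; unfold rpow; destruct (Rlt_dec 0 x); [auto|lra]. Qed.

Lemma rpow_npos x e : x <= 0 -> rpow x e = 0.
Proof. intros; unfold rpow; destruct (Rlt_dec 0 x); [lra|auto]. Qed.

Lemma PP_pos t M : 0 < PP t M.
Proof. apply rp_pos. Qed.
Lemma AA_pos s M : 0 < AA s M.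
Proof. apply rp_pos. Qed.
Lemma A2_pos s M : 0 < A2 s M.
Proof. apply rp_pos. Qed.

Lemma rev_eq N s t M eta k p : 0 < M -> 0 < t -> 0 < s < 1 -> 0 < p < PP t M ->
  revenue N s t M eta k p = N * Fk s t M eta k p.
Proof.
  intros HM Ht Hs Hp. unfold revenue. rewrite pmax_eq by auto.
  destruct (Rlt_dec p (PP t M)); [|lra].
  unfold tailProb, tailMean, Fk. rewrite (rpow_pos p) by lra.
  rewrite !(rpow_pos (Rpower p (1/t))) by apply rp_pos.
  rewrite !(rpow_pos M) by lra. rewrite !Rpower_mult.
  replace (1 / t * (1 - s)) with (al s t) by (unfold al; field; lra).
  replace (1 / t * (2 - s)) with (gg s t + 1) by (unfold gg; field; lra).
  rewrite (Rpower_plus 1 (al s t) p), Rpower_1 by lra. fold (AA s M) (A2 s M). unfold cc.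
  assert (0 < AA s M) by apply AA_pos. field. lra.
Qed.

Lemma rev_npos N s t M eta k p : 0 < M -> s < 1 -> p <= 0 ->
  revenue N s t M eta k p = N * (p - eta*k*cc s*A2 s M/AA s M).
Proof.
  intros HM Hs Hp. unfold revenue. rewrite pmax_eq by auto.
  destruct (Rlt_dec p (PP t M)); [|assert (0 < PP t M) by apply PP_pos; lra].
  unfold tailProb, tailMean. rewrite (rpow_npos p) by lra. rewrite (rpow_npos 0) by lra.
  rewrite !(rpow_pos M) by lra. fold (AA s M) (A2 s M). unfold cc.
  assert (0 < AA s M) by apply AA_pos. rewrite (rpow_npos 0 (2-s)) by lra. field. lra.
Qed.

Lemma rev_big N s t M eta k p : 0 < M -> PP t M <= p -> revenue N s t M eta k p = 0.
Proof.
  intros HM Hp. unfold revenue. rewrite pmax_eq by auto.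
  destruct (Rlt_dec p (PP t M)); [lra|auto].
Qed.

Lemma al_pos s t : 0 < s < 1 -> 0 < t < 1 -> 0 < al s t.
Proof. intros; unfold al; apply Rdiv_lt_0_compat; lra. Qed.

Lemma al_gg s t : 0 < s < 1 -> 0 < t < 1 -> al s t < gg s t.
Proof.
  intros. unfold al, gg. apply Rminus_gt_0_lt.
  replace ((2 - s) / t - 1 - (1 - s) / t) with ((1 - t)/t) by (field; lra).
  apply Rdiv_lt_0_compat; lra.
Qed.

Lemma gg_pos s t : 0 < s < 1 -> 0 < t < 1 -> 0 < gg s t.
Proof. intros; pose proof (al_pos s t); pose proof (al_gg s t); lra. Qed.

Lemma cc_pos s : 0 < s < 1 -> 0 < cc s.
Proof. intros; unfold cc; apply Rdiv_lt_0_compat; lra. Qed.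

Lemma BB_pos s t eta k : 0 < s < 1 -> 0 < t < 1 -> 0 < eta -> 0 < k -> 0 < BB s t eta k.
Proof.
  intros. unfold BB. pose proof (cc_pos s H). pose proof (gg_pos s t H H0).
  apply Rmult_lt_0_compat; [|lra]. apply Rmult_lt_0_compat; auto. apply Rmult_lt_0_compat; auto.
Qed.

Lemma Fk_der s t M eta k p : 0 < p ->
  derivable_pt_lim (Fk s t M eta k) p (Dk s t M eta k p).
Proof.
  intros Hp. set (a := al s t). set (g := gg s t). set (A := AA s M).
  assert (HA : 0 < A) by apply AA_pos.
  apply derivable_pt_lim_ext with
    (f := fun y => id y + (- (eta*k*cc s*A2 s M/A) + (-1/A) * Rpower y (1 + a)
                  + (eta*k*cc s/A) * Rpower y (g + 1))).
  { intros y. unfold Fk, id. fold a g A. field. lra. }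
  replace (Dk s t M eta k p) with
     (1 + ((-1/A) * ((1+a) * Rpower p (1 + a - 1)) + (eta*k*cc s/A) * ((g + 1) * Rpower p (g + 1 - 1)))).
  { apply derivable_pt_lim_plus. apply derivable_pt_lim_id. apply dlin2; apply rp_deriv; auto. }
  unfold Dk, Dg, BB. fold a g A. replace (1 + a - 1) with a by ring.
  replace (g + 1 - 1) with g by ring. field. lra.
Qed.

Lemma rev_der N s t M eta k p : 0 < M -> 0 < t -> 0 < s < 1 -> 0 < p < PP t M ->
  derivable_pt_lim (revenue N s t M eta k) p (N * Dk s t M eta k p).
Proof.
  intros. apply (dpl_loc _ (fun y => N * Fk s t M eta k y) 0 (PP t M)); auto.
  intros; apply rev_eq; auto.
  apply derivable_pt_lim_scal. apply Fk_der; lra.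
Qed.

Lemma P_al s t M : 0 < M -> 0 < t < 1 -> Rpower (PP t M) (al s t) = AA s M.
Proof. intros. unfold PP, AA, al. rewrite Rpower_mult. f_equal. field. lra. Qed.

Lemma P_g1 s t M : 0 < M -> 0 < t < 1 -> Rpower (PP t M) (gg s t + 1) = A2 s M.
Proof. intros. unfold PP, A2, gg. rewrite Rpower_mult. f_equal. field. lra. Qed.

Lemma P_g s t M : 0 < M -> 0 < t < 1 -> Rpower (PP t M) (gg s t) = AA s M * Rpower M (1 - t).
Proof.
  intros. unfold PP, AA, gg. rewrite Rpower_mult, <- Rpower_plus. f_equal. field. lra.
Qed.

Lemma Dk_P s t M eta k : 0 < s < 1 -> 0 < t < 1 -> 0 < M -> eta*k*Rpower M (1-t) < 1 ->
  Dk s t M eta k (PP t M) < 0.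
Proof.
  intros. unfold Dk, Dg. rewrite P_al, P_g by auto.
  assert (0 < AA s M) by apply AA_pos.
  replace (1 + - (1 + al s t) / AA s M * AA s M + BB s t eta k / AA s M * (AA s M * Rpower M (1 - t)))
    with (al s t * (eta*k*Rpower M (1-t) - 1)).
  { pose proof (al_pos s t H H0). nra. }
  unfold BB, cc, gg, al. field. lra.
Qed.

Lemma Fk_P s t M eta k : 0 < s < 1 -> 0 < t < 1 -> 0 < M -> Fk s t M eta k (PP t M) = 0.
Proof.
  intros. unfold Fk. rewrite P_g1 by auto. rewrite (Rpower_plus 1 (al s t)), P_al by auto. rewrite Rpower_1 by apply PP_pos.
  assert (0 < AA s M) by apply AA_pos. field. lra.
Qed.

Definition crit s t M eta k z :=
  0 < z < PP t M /\ Dk s t M eta k z = 0 /\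
  (forall p, 0 < p < z -> 0 < Dk s t M eta k p) /\
  (forall p, z < p <= PP t M -> Dk s t M eta k p < 0) /\ Sk s t eta k z < 0.

Lemma core s t M eta k : 0 < s < 1 -> 0 < t < 1 -> 0 < M -> 0 < eta -> 0 < k ->
  eta*k*Rpower M (1-t) < 1 -> exists z, crit s t M eta k z.
Proof.
  intros. unfold crit, Dk, Sk.
  apply shape. apply al_pos; auto. apply al_gg; auto. apply AA_pos. apply BB_pos; auto.
  apply PP_pos. apply Dk_P; auto.
Qed.

Lemma crit_uniq s t M eta k z q : crit s t M eta k z -> 0 < q <= PP t M ->
  Dk s t M eta k q = 0 -> q = z.
Proof.
  intros [Hz [H0 [H1 [H2 _]]]] Hq Hd.
  destruct (Rtotal_order q z) as [h|[h|h]]; auto.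
  - specialize (H1 q); lra.
  - specialize (H2 q); lra.
Qed.

Lemma ekc_pos s eta k : 0 < s < 1 -> 0 < eta -> 0 < k -> 0 < eta * k * cc s.
Proof. intros. pose proof (cc_pos s H). assert (0 < eta * k) by nra. nra. Qed.

Lemma R1 N s t M eta k z x y : 0 < N -> 0 < s < 1 -> 0 < t < 1 -> 0 < M ->
  crit s t M eta k z -> 0 < x -> x < y -> y <= z ->
  revenue N s t M eta k x < revenue N s t M eta k y.
Proof.
  intros HN Hs Ht HM [Hz [H0 [H1 [H2 _]]]] Hx Hxy Hyz.
  destruct (MVT_cor2 (revenue N s t M eta k) (fun c => N * Dk s t M eta k c) x y)
    as [c [Hc1 Hc2]]; auto.
  intros c Hc; apply rev_der; lra.
  specialize (H1 c ltac:(lra)). assert (0 < N * Dk s t M eta k c * (y - x)).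
  { apply Rmult_lt_0_compat; [apply Rmult_lt_0_compat|]; lra. } lra.
Qed.

Lemma R2 N s t M eta k z x y : 0 < N -> 0 < s < 1 -> 0 < t < 1 -> 0 < M ->
  crit s t M eta k z -> z <= x -> x < y -> y < PP t M ->
  revenue N s t M eta k y < revenue N s t M eta k x.
Proof.
  intros HN Hs Ht HM [Hz [H0 [H1 [H2 _]]]] Hx Hxy Hyz.
  destruct (MVT_cor2 (revenue N s t M eta k) (fun c => N * Dk s t M eta k c) x y)
    as [c [Hc1 Hc2]]; auto.
  intros c Hc; apply rev_der; lra.
  specialize (H2 c ltac:(lra)). assert (0 < N * (- Dk s t M eta k c) * (y - x)).
  { apply Rmult_lt_0_compat; [apply Rmult_lt_0_compat|]; lra. } lra.
Qed.

Lemma R3 N s t M eta k y : 0 < N -> 0 < s < 1 -> 0 < t < 1 -> 0 < M -> 0 < eta -> 0 < k ->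
  0 < y < PP t M -> revenue N s t M eta k 0 < revenue N s t M eta k y.
Proof.
  intros. rewrite rev_npos by lra. rewrite rev_eq by lra. unfold Fk.
  assert (Rpower y (al s t) < AA s M).
  { rewrite <- (P_al s t M) by auto. apply rp_lt_base; try lra. apply al_pos; auto. }
  rewrite (Rpower_plus 1 (al s t)), Rpower_1 by lra.
  assert (HA := AA_pos s M). pose proof (rp_pos y (gg s t + 1)).
  pose proof (cc_pos s H0).
  assert (y * Rpower y (al s t) / AA s M < y).
  { apply (Rmult_lt_reg_r (AA s M)); auto. field_simplify; try lra. nra. }
  assert (0 < eta * k * cc s * Rpower y (gg s t + 1) / AA s M).
  { apply Rdiv_lt_0_compat; auto. pose proof (ekc_pos s eta k). apply Rmult_lt_0_compat; auto. }
  apply Rmult_lt_compat_l; auto.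
  replace (eta * k * cc s * (A2 s M - Rpower y (gg s t + 1)) / AA s M) with
    (eta * k * cc s * A2 s M / AA s M - eta * k * cc s * Rpower y (gg s t + 1) / AA s M)
    by (field; lra). lra.
Qed.

Lemma R4 N s t M eta k z p : 0 < N -> 0 < s < 1 -> 0 < t < 1 -> 0 < M ->
  crit s t M eta k z -> z <= p < PP t M -> 0 < revenue N s t M eta k p.
Proof.
  intros HN Hs Ht HM [Hz [H0 [H1 [H2 _]]]] Hp.
  rewrite rev_eq by lra.
  destruct (MVT_cor2 (Fk s t M eta k) (Dk s t M eta k) p (PP t M))
    as [c [Hc1 Hc2]]; try lra.
  intros c Hc; apply Fk_der; lra.
  rewrite Fk_P in Hc1 by auto.
  specialize (H2 c ltac:(lra)). assert (0 < (- Dk s t M eta k c) * (PP t M - p)).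
  { apply Rmult_lt_0_compat; lra. }
  apply Rmult_lt_0_compat; lra.
Qed.

Definition LB s t M eta k :=
  Rmin (eta*k*cc s*A2 s M/(2*AA s M)) (Rpower (A2 s M/2) (/(gg s t + 1))).

Lemma LB_pos s t M eta k : 0 < s < 1 -> 0 < eta -> 0 < k -> 0 < LB s t M eta k.
Proof.
  intros. unfold LB. apply Rmin_pos; [|apply rp_pos].
  pose proof (cc_pos s H). pose proof (AA_pos s M). pose proof (A2_pos s M).
  pose proof (ekc_pos s eta k). apply Rdiv_lt_0_compat; [apply Rmult_lt_0_compat|]; auto; lra.
Qed.

Lemma R5 N s t M eta k p : 0 < N -> 0 < s < 1 -> 0 < t < 1 -> 0 < M -> 0 < eta -> 0 < k ->
  0 < revenue N s t M eta k p -> 0 < p < PP t M /\ LB s t M eta k <= p.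
Proof.
  intros HN Hs Ht HM He Hk Hr.
  pose proof (cc_pos s Hs). pose proof (AA_pos s M). pose proof (A2_pos s M).
  pose proof (gg_pos s t Hs Ht).
  assert (Hekc : 0 < eta * k * cc s) by (apply ekc_pos; auto).
  destruct (Rle_or_lt p 0) as [h|h].
  { rewrite rev_npos in Hr by lra.
    assert (0 < eta * k * cc s * A2 s M / AA s M) by (apply Rdiv_lt_0_compat; auto; nra).
    assert (p - eta * k * cc s * A2 s M / AA s M < 0) by lra. nra. }
  destruct (Rle_or_lt (PP t M) p) as [h'|h'].
  { rewrite rev_big in Hr by auto. lra. }
  split; [lra|]. rewrite rev_eq in Hr by lra. unfold Fk in Hr.
  assert (0 < Fk s t M eta k p) by (unfold Fk; nra).
  unfold Fk in H3. pose proof (rp_pos p (1 + al s t)).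
  assert (Rpower p (1 + al s t) / AA s M > 0) by (apply Rdiv_lt_0_compat; auto).
  set (X := Rpower p (gg s t + 1)) in *.
  assert (Hp : eta * k * cc s * (A2 s M - X) / AA s M < p) by lra.
  unfold LB. destruct (Rle_or_lt X (A2 s M / 2)) as [hx|hx].
  - eapply Rle_trans; [apply Rmin_l|].
    assert (eta * k * cc s * A2 s M / (2 * AA s M) <= eta * k * cc s * (A2 s M - X) / AA s M).
    { unfold Rdiv. rewrite Rinv_mult. 
      assert (eta * k * cc s * A2 s M * (/ 2 * / AA s M) = (eta * k * cc s * (A2 s M / 2)) * / AA s M) by (field; lra).
      rewrite H6. apply Rmult_le_compat_r. apply Rlt_le, Rinv_0_lt_compat; auto.
      apply Rmult_le_compat_l; lra. }
    lra.
  - eapply Rle_trans; [apply Rmin_r|].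
    destruct (Rle_or_lt (Rpower (A2 s M / 2) (/ (gg s t + 1))) p) as [hh|hh]; auto.
    exfalso. assert (Rpower p (gg s t + 1) < Rpower (Rpower (A2 s M / 2) (/ (gg s t + 1))) (gg s t + 1)).
    { apply rp_lt_base; auto; lra. }
    rewrite Rpower_mult in H6. replace (/ (gg s t + 1) * (gg s t + 1)) with 1 in H6 by (field; lra).
    rewrite Rpower_1 in H6 by lra. fold X in H6. lra.
Qed.

Definition pk s t M kp N p := kp*N*(cc s*(A2 s M - Rpower p (gg s t + 1))/AA s M).

Lemma peak_eq N s t M kp p : 0 < M -> 0 < t < 1 -> 0 < s < 1 -> 0 < p < PP t M ->
  peak N s t M kp p = pk s t M kp N p.
Proof.
  intros HM Ht Hs Hp. unfold peak. rewrite pmax_eq by auto.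
  destruct (Rlt_dec p (PP t M)); [|lra].
  unfold tailMean, pk. rewrite (rpow_pos p) by lra.
  rewrite !(rpow_pos (Rpower p (1/t))) by apply rp_pos.
  rewrite !(rpow_pos M) by lra. rewrite !Rpower_mult.
  replace (1 / t * (2 - s)) with (gg s t + 1) by (unfold gg; field; lra).
  fold (AA s M) (A2 s M). unfold cc. reflexivity.
Qed.

Lemma pk_dec s t M kp N x y : 0 < s < 1 -> 0 < t < 1 -> 0 < kp -> 0 < N -> 0 < x -> x < y ->
  pk s t M kp N y < pk s t M kp N x.
Proof.
  intros. unfold pk. pose proof (cc_pos s H). pose proof (AA_pos s M).
  assert (Rpower x (gg s t + 1) < Rpower y (gg s t + 1)).
  { apply rp_lt_base; auto. pose proof (gg_pos s t H H0); lra. }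
  assert (0 < kp * N) by nra.
  apply Rmult_lt_compat_l; auto. unfold Rdiv. apply Rmult_lt_compat_r.
  apply Rinv_0_lt_compat; auto. nra.
Qed.

Lemma pk_cont s t M kp N p : 0 < p -> continuity_pt (pk s t M kp N) p.
Proof.
  intros. apply derivable_continuous_pt.
  exists ((- (kp*N*cc s/AA s M)) * ((gg s t + 1) * Rpower p (gg s t + 1 - 1)) + 0 * ((gg s t + 1) * Rpower p (gg s t + 1 - 1))).
  apply derivable_pt_lim_ext with
    (f := fun y => kp*N*cc s*A2 s M/AA s M + (- (kp*N*cc s/AA s M)) * Rpower y (gg s t + 1) + 0 * Rpower y (gg s t + 1)).
  { intros. unfold pk. pose proof (AA_pos s M). field. lra. }
  apply dlin2; apply rp_deriv; auto.
Qed.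

Lemma cont_elim f x eps : continuity_pt f x -> 0 < eps ->
  exists d, 0 < d /\ forall y, Rabs (y - x) < d -> Rabs (f y - f x) < eps.
Proof.
  unfold continuity_pt, continue_in, limit1_in, limit_in. intros H He.
  destruct (H eps He) as [d [Hd H']]. exists d. split; auto. intros y Hy.
  destruct (Req_dec y x) as [->|hne].
  - rewrite Rminus_eq_0, Rabs_R0; auto.
  - apply H'. split. split; [exact I| auto]. simpl; unfold R_dist; auto.
Qed.

Lemma cont_intro f x : (forall eps, 0 < eps ->
  exists d, 0 < d /\ forall y, Rabs (y - x) < d -> Rabs (f y - f x) < eps) -> continuity_pt f x.
Proof.
  unfold continuity_pt, continue_in, limit1_in, limit_in. intros H eps He.
  destruct (H eps He) as [d [Hd H']]. exists d. split; auto. intros y [_ Hy].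
  apply H'. exact Hy.
Qed.


Lemma rev_le_z N s t M eta k z x w : 0 < N -> 0 < s < 1 -> 0 < t < 1 -> 0 < M ->
  crit s t M eta k z -> 0 < x -> x <= w -> w <= z ->
  revenue N s t M eta k x <= revenue N s t M eta k w.
Proof.
  intros. destruct (Req_dec x w) as [->|hne]; [lra|].
  apply Rlt_le; eapply R1; eauto; lra.
Qed.

Lemma rev_ge_z N s t M eta k z w y : 0 < N -> 0 < s < 1 -> 0 < t < 1 -> 0 < M ->
  crit s t M eta k z -> z <= w -> w <= y -> y < PP t M ->
  revenue N s t M eta k y <= revenue N s t M eta k w.
Proof.
  intros. destruct (Req_dec w y) as [->|hne]; [lra|].
  apply Rlt_le; eapply R2; eauto; lra.
Qed.

Lemma rev_max N s t M eta k z q : 0 < N -> 0 < s < 1 -> 0 < t < 1 -> 0 < M ->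
  crit s t M eta k z -> 0 < q < PP t M -> q <> z ->
  revenue N s t M eta k q < revenue N s t M eta k z.
Proof.
  intros. destruct (Rlt_or_le q z).
  - eapply R1; eauto; lra.
  - eapply R2; eauto; try lra.
Qed.

Lemma feas_ne N C s t M eta k kp z : 0 < N -> 0 < C -> 0 < s < 1 -> 0 < t < 1 -> 0 < M ->
  0 < kp -> crit s t M eta k z -> exists p, feasible N C s t M eta k kp p.
Proof.
  intros HN HC Hs Ht HM Hkp Hz.
  pose proof (cc_pos s Hs) as Hc. pose proof (AA_pos s M) as HA. pose proof (A2_pos s M) as HA2.
  pose proof (gg_pos s t Hs Ht) as Hg.
  set (w := Rmax (A2 s M / 2) (A2 s M - C * AA s M / (kp * N * cc s))).
  assert (Hw0 : 0 < w) by (unfold w; eapply Rlt_le_trans; [|apply Rmax_l]; lra).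
  assert (HwA : w < A2 s M).
  { unfold w. apply Rmax_lub_lt; [lra|].
    assert (0 < C * AA s M / (kp * N * cc s)).
    { apply Rdiv_lt_0_compat; [nra|]. assert (0 < kp * N) by nra. nra. } lra. }
  set (q := Rpower w (/ (gg s t + 1))).
  assert (Hq : Rpower q (gg s t + 1) = w).
  { unfold q. rewrite Rpower_mult. replace (/ (gg s t + 1) * (gg s t + 1)) with 1 by (field; lra).
    apply Rpower_1; auto. }
  assert (Hq0 : 0 < q) by apply rp_pos.
  assert (HqP : q < PP t M).
  { destruct (Rlt_or_le q (PP t M)) as [h|h]; auto.
    assert (Rpower (PP t M) (gg s t + 1) <= Rpower q (gg s t + 1)).
    { apply rp_le_base; auto. apply PP_pos. lra. }
    rewrite P_g1, Hq in H by auto. lra. }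
  assert (Hz0 := proj1 Hz).
  set (p := (Rmax z q + PP t M) / 2).
  assert (Hm1 := Rmax_l z q). assert (Hm2 := Rmax_r z q).
  assert (Hm3 : Rmax z q < PP t M) by (apply Rmax_lub_lt; lra).
  exists p. split.
  - eapply R4; eauto. unfold p; lra.
  - rewrite peak_eq by (auto; unfold p; lra).
    assert (Rpower q (gg s t + 1) < Rpower p (gg s t + 1)) by (apply rp_lt_base; auto; unfold p; lra).
    rewrite Hq in H.
    assert (A2 s M - C * AA s M / (kp * N * cc s) <= w) by apply Rmax_r.
    unfold pk. assert (0 < kp * N) by nra.
    apply (Rmult_le_reg_r (AA s M / (kp * N * cc s))). apply Rdiv_lt_0_compat; nra.
    replace (kp * N * (cc s * (A2 s M - Rpower p (gg s t + 1)) / AA s M) * (AA s M / (kp * N * cc s)))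
      with (A2 s M - Rpower p (gg s t + 1)) by (field; lra).
    replace (C * (AA s M / (kp * N * cc s))) with (C * AA s M / (kp * N * cc s)) by (field; lra).
    lra.
Qed.

Lemma feas_conn N C s t M eta k kp z x y w : 0 < N -> 0 < s < 1 -> 0 < t < 1 -> 0 < M ->
  0 < eta -> 0 < k -> 0 < kp -> crit s t M eta k z ->
  feasible N C s t M eta k kp x -> feasible N C s t M eta k kp y -> x <= w -> w <= y ->
  feasible N C s t M eta k kp w.
Proof.
  intros HN Hs Ht HM He Hk Hkp Hz [Hx1 Hx2] [Hy1 Hy2] Hxw Hwy.
  destruct (R5 N s t M eta k x) as [Hx3 _]; auto.
  destruct (R5 N s t M eta k y) as [Hy3 _]; auto.
  split.
  - destruct (Rle_or_lt w z).
    + assert (revenue N s t M eta k x <= revenue N s t M eta k w) by (eapply rev_le_z; eauto; lra). lra.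
    + assert (revenue N s t M eta k y <= revenue N s t M eta k w) by (eapply rev_ge_z; eauto; lra). lra.
  - destruct (Req_dec x w) as [<-|hne]; auto.
    rewrite peak_eq by (auto; lra). rewrite peak_eq in Hx2 by (auto; lra).
    assert (pk s t M kp N w < pk s t M kp N x) by (apply pk_dec; auto; lra). lra.
Qed.

Lemma glb_basic N C s t M eta k kp z p0 : 0 < N -> 0 < C -> 0 < s < 1 -> 0 < t < 1 -> 0 < M ->
  0 < eta -> 0 < k -> 0 < kp -> crit s t M eta k z ->
  is_glb (feasible N C s t M eta k kp) p0 ->
  0 < p0 < PP t M /\ peak N s t M kp p0 <= C.
Proof.
  intros HN HC Hs Ht HM He Hk Hkp Hz [Hg1 Hg2].
  destruct (feas_ne N C s t M eta k kp z) as [p1 Hp1]; auto.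
  assert (Hp0 : p0 <= p1) by auto.
  destruct (R5 N s t M eta k p1) as [Hp1' _]; auto. apply Hp1.
  assert (LB s t M eta k <= p0).
  { apply Hg2. intros y Hy. apply (R5 N s t M eta k y); auto. apply Hy. }
  pose proof (LB_pos s t M eta k Hs He Hk).
  assert (Hr : 0 < p0 < PP t M) by lra. split; auto.
  rewrite peak_eq by auto.
  destruct (Rle_or_lt (pk s t M kp N p0) C) as [h|h]; auto. exfalso.
  destruct (cont_elim (pk s t M kp N) p0 (pk s t M kp N p0 - C)) as [d [Hd Hd']].
  apply pk_cont; lra. lra.
  assert (p0 + d/2 <= p0); [|lra].
  apply Hg2. intros y Hy. assert (p0 <= y) by auto.
  destruct (Rle_or_lt (p0 + d/2) y) as [h'|h']; auto. exfalso.
  destruct Hy as [Hy1 Hy2]. destruct (R5 N s t M eta k y) as [Hy3 _]; auto.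
  rewrite peak_eq in Hy2 by auto.
  assert (Rabs (y - p0) < d) by (apply Rabs_def1; lra).
  specialize (Hd' y H2). apply Rabs_def2 in Hd'. lra.
Qed.

Lemma rp_div x y e : 0 < x -> 0 < y -> Rpower (x / y) e = Rpower x e / Rpower y e.
Proof.
  intros. unfold Rpower, Rdiv. rewrite ln_mult, ln_Rinv; auto.
  rewrite Rmult_plus_distr_l, exp_plus. f_equal.
  rewrite <- exp_Ropp. f_equal. ring. apply Rinv_0_lt_compat; auto.
Qed.

Lemma p0_formula N s t M kp C p0 : 0 < s < 1 -> 0 < t < 1 -> 0 < M -> 0 < N -> 0 < kp ->
  0 < p0 -> pk s t M kp N p0 = C ->
  p0 = rpow M t * rpow (1 - C / (kp * N * meanPhi s M)) (t / (2 - s)).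
Proof.
  intros Hs Ht HM HN Hkp Hp0 HC.
  pose proof (cc_pos s Hs) as Hc. pose proof (AA_pos s M) as HA. pose proof (A2_pos s M) as HA2.
  set (X := Rpower p0 (gg s t + 1)).
  assert (HX : 0 < X) by apply rp_pos.
  assert (HA2e : A2 s M = AA s M * M).
  { unfold A2, AA. replace (2 - s) with ((1 - s) + 1) by ring. rewrite Rpower_plus, Rpower_1; auto. }
  assert (E1 : 1 - C / (kp * N * meanPhi s M) = X / A2 s M).
  { rewrite <- HC. unfold pk, meanPhi. fold X. rewrite HA2e. unfold cc. field.
    repeat split; try lra. }
  rewrite E1. rewrite (rpow_pos M) by auto. rewrite rpow_pos by (apply Rdiv_lt_0_compat; auto).
  rewrite rp_div by auto. unfold X, A2. rewrite !Rpower_mult.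
  replace ((gg s t + 1) * (t / (2 - s))) with 1 by (unfold gg; field; lra).
  replace ((2 - s) * (t / (2 - s))) with t by (field; lra).
  rewrite Rpower_1 by auto. pose proof (rp_pos M t). field. lra.
Qed.

Lemma part_ii N C s t M eta k kp z p0 : 0 < N -> 0 < C -> 0 < s < 1 -> 0 < t < 1 -> 0 < M ->
  0 < eta -> 0 < k -> 0 < kp -> crit s t M eta k z ->
  is_glb (feasible N C s t M eta k kp) p0 -> Dk s t M eta k p0 < 0 ->
  unique_equilibrium N C s t M eta k kp p0 /\ peak N s t M kp p0 = C /\
  p0 = rpow M t * rpow (1 - C / (kp * N * meanPhi s M)) (t / (2 - s)).
Proof.
  intros HN HC Hs Ht HM He Hk Hkp Hz Hglb HD.
  destruct (glb_basic N C s t M eta k kp z p0) as [Hp0 Hpk]; auto.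
  destruct Hglb as [Hg1 Hg2].
  assert (Hzp : z < p0).
  { destruct Hz as [Hz [H0 [H1 _]]]. destruct (Rtotal_order p0 z) as [h|[h|h]]; auto.
    specialize (H1 p0); lra. subst; lra. }
  assert (Hr : 0 < revenue N s t M eta k p0) by (eapply R4; eauto; lra).
  assert (HpC : peak N s t M kp p0 = C).
  { destruct (Req_dec (peak N s t M kp p0) C) as [h|h]; auto. exfalso.
    rewrite peak_eq in h, Hpk by auto.
    assert (hlt : pk s t M kp N p0 < C) by lra.
    destruct (cont_elim (pk s t M kp N) p0 (C - pk s t M kp N p0)) as [d [Hd Hd']].
    apply pk_cont; lra. lra.
    set (y := p0 - Rmin (d/2) ((p0 - z)/2)).
    assert (Hm1 := Rmin_l (d/2) ((p0 - z)/2)). assert (Hm2 := Rmin_r (d/2) ((p0 - z)/2)).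
    assert (Hm3 : 0 < Rmin (d/2) ((p0 - z)/2)) by (apply Rmin_pos; lra).
    assert (Hy : feasible N C s t M eta k kp y).
    { split. eapply R4; eauto. unfold y; lra.
      assert (0 < z) by apply (proj1 Hz).
      rewrite peak_eq by (auto; unfold y; lra).
      assert (Rabs (y - p0) < d) by (apply Rabs_def1; unfold y; lra).
      specialize (Hd' y H0). apply Rabs_def2 in Hd'. lra. }
    specialize (Hg1 y Hy). unfold y in Hg1. lra. }
  assert (Hf : feasible N C s t M eta k kp p0) by (split; lra).
  assert (Heq : equilibrium N C s t M eta k kp p0).
  { split; auto. intros q Hq. assert (p0 <= q) by auto.
    destruct (R5 N s t M eta k q) as [Hq' _]; auto. apply Hq.
    eapply rev_ge_z; eauto; lra. }
  split; [split; auto|split; auto].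
  - intros q [Hq Hq2]. specialize (Hq2 p0 Hf). assert (p0 <= q) by auto.
    destruct (R5 N s t M eta k q) as [Hq' _]; auto. apply Hq.
    destruct (Req_dec q p0) as [h|h]; auto. exfalso.
    assert (revenue N s t M eta k q < revenue N s t M eta k p0) by (eapply R2; eauto; lra). lra.
  - apply (p0_formula N s t M kp C p0); auto; try lra.
    rewrite <- peak_eq by auto. auto.
Qed.

Lemma part_iii N C s t M eta k kp z p0 : 0 < N -> 0 < C -> 0 < s < 1 -> 0 < t < 1 -> 0 < M ->
  0 < eta -> 0 < k -> 0 < kp -> crit s t M eta k z ->
  is_glb (feasible N C s t M eta k kp) p0 -> 0 < Dk s t M eta k p0 ->
  unique_equilibrium N C s t M eta k kp z /\ peak N s t M kp z <> C.
Proof.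
  intros HN HC Hs Ht HM He Hk Hkp Hz Hglb HD.
  destruct (glb_basic N C s t M eta k kp z p0) as [Hp0 Hpk]; auto.
  assert (Hzp : p0 < z).
  { destruct Hz as [Hz [H0 [H1 [H2 _]]]]. destruct (Rtotal_order p0 z) as [h|[h|h]]; auto.
    subst; lra. specialize (H2 p0); lra. }
  pose proof (proj1 Hz) as Hz0.
  assert (Hpz : peak N s t M kp z < C).
  { rewrite peak_eq in Hpk |- * by (auto; lra).
    assert (pk s t M kp N z < pk s t M kp N p0) by (apply pk_dec; auto; lra). lra. }
  assert (Hf : feasible N C s t M eta k kp z).
  { split; [eapply R4; eauto; lra| lra]. }
  split; [|lra].
  assert (Hmax : forall q, feasible N C s t M eta k kp q -> q <> z ->
     revenue N s t M eta k q < revenue N s t M eta k z).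
  { intros q Hq hne. destruct (R5 N s t M eta k q) as [Hq' _]; auto. apply Hq.
    eapply rev_max; eauto. }
  split. split; auto.
  - intros q Hq. destruct (Req_dec q z) as [->|h]; [lra|]. apply Rlt_le; auto.
  - intros q [Hq Hq2]. specialize (Hq2 z Hf).
    destruct (Req_dec q z) as [->|h]; auto. specialize (Hmax q Hq h). lra.
Qed.

Definition good s t M eta k := 0 < s < 1 /\ 0 < t < 1 /\ 0 < M /\ 0 < eta /\ 0 < k /\
  eta*k*Rpower M (1-t) < 1.

Definition ps s t M eta k := epsilon (inhabits 0) (fun z => crit s t M eta k z).

Lemma crit_eq s t M eta k z1 z2 : crit s t M eta k z1 -> crit s t M eta k z2 -> z1 = z2.
Proof.
  intros H1 H2. apply (crit_uniq s t M eta k z2 z1); auto.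
  destruct H1 as [h [h' _]]; lra. apply H1.
Qed.

Lemma ps_crit s t M eta k : good s t M eta k -> crit s t M eta k (ps s t M eta k).
Proof.
  intros [Hs [Ht [HM [He [Hk Hq]]]]]. unfold ps. apply epsilon_spec. apply core; auto.
Qed.

Lemma Dk_diff s t M eta k1 k2 p :
  Dk s t M eta k2 p = Dk s t M eta k1 p +
     (k2 - k1) * (eta * cc s * (gg s t + 1) / AA s M) * Rpower p (gg s t).
Proof. unfold Dk, Dg, BB. pose proof (AA_pos s M). field. lra. Qed.

Lemma ps_mono s t M eta k1 k2 : good s t M eta k1 -> good s t M eta k2 -> k1 <= k2 ->
  ps s t M eta k1 <= ps s t M eta k2.
Proof.
  intros G1 G2 Hk. destruct (Req_dec k1 k2) as [->|hne]; [lra|].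
  pose proof (ps_crit _ _ _ _ _ G1) as C1. pose proof (ps_crit _ _ _ _ _ G2) as C2.
  set (z1 := ps s t M eta k1) in *. set (z2 := ps s t M eta k2) in *.
  destruct G1 as [Hs [Ht [HM [He _]]]].
  assert (Hd : 0 < Dk s t M eta k2 z1).
  { rewrite (Dk_diff s t M eta k1 k2). destruct C1 as [_ [Hz1 _]]. rewrite Hz1.
    pose proof (cc_pos s Hs). pose proof (gg_pos s t Hs Ht). pose proof (AA_pos s M).
    pose proof (rp_pos z1 (gg s t)).
    assert (0 < eta * cc s * (gg s t + 1) / AA s M).
    { apply Rdiv_lt_0_compat; auto. assert (0 < eta * cc s) by nra. nra. }
    assert (0 < (k2 - k1) * (eta * cc s * (gg s t + 1) / AA s M)) by (apply Rmult_lt_0_compat; lra).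
    nra. }
  destruct (Rle_or_lt z1 z2) as [h|h]; auto. exfalso.
  destruct C2 as [_ [_ [_ [H2 _]]]]. destruct C1 as [[_ HP] _].
  specialize (H2 z1 ltac:(lra)). lra.
Qed.

Definition c3 s t M eta := eta * cc s * (gg s t + 1) / AA s M.

Lemma c3_pos s t M eta : 0 < s < 1 -> 0 < t < 1 -> 0 < eta -> 0 < c3 s t M eta.
Proof.
  intros. unfold c3. pose proof (cc_pos s H). pose proof (gg_pos s t H H0). pose proof (AA_pos s M).
  apply Rdiv_lt_0_compat; auto. assert (0 < eta * cc s) by nra. nra.
Qed.

Lemma small_prod h r Y T : 0 <= Y <= T -> 0 < T -> 0 < r -> -r < h < r -> - (r*T) < h*Y < r*T.
Proof.
  intros. assert (0 < r * T) by nra. destruct (Rle_or_lt 0 h).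
  - assert (h * Y <= h * T) by (apply Rmult_le_compat_l; lra).
    assert (h * T < r * T) by (apply Rmult_lt_compat_r; lra). nra.
  - assert (h * Y <= 0) by nra.
    assert ((-h) * Y <= (-h) * T) by (apply Rmult_le_compat_l; lra).
    assert ((-h) * T < r * T) by (apply Rmult_lt_compat_r; lra). nra.
Qed.

Lemma ps_cont s t M eta k0 d0 : good s t M eta k0 -> 0 < d0 ->
  (forall k, Rabs (k - k0) < d0 -> good s t M eta k) ->
  continuity_pt (ps s t M eta) k0.
Proof.
  intros G0 Hd0 Hgood. apply cont_intro. intros eps Heps.
  pose proof (ps_crit _ _ _ _ _ G0) as C0.
  set (z := ps s t M eta k0) in *.
  destruct G0 as [Hs [Ht [HM [He [Hk Hq]]]]].
  destruct C0 as [[Hz0 HzP] [HDz [H1 [H2 _]]]].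
  set (e := Rmin eps (Rmin z (PP t M - z)) / 2).
  assert (He1 := Rmin_l eps (Rmin z (PP t M - z))).
  assert (He2 := Rmin_r eps (Rmin z (PP t M - z))).
  assert (He3 := Rmin_l z (PP t M - z)). assert (He4 := Rmin_r z (PP t M - z)).
  assert (He0 : 0 < Rmin eps (Rmin z (PP t M - z))) by (repeat apply Rmin_pos; lra).
  set (pm := z - e). set (pp := z + e).
  assert (Hpm : 0 < pm < z) by (unfold pm, e; lra).
  assert (Hpp : z < pp <= PP t M) by (unfold pp, e; lra).
  assert (Ha : 0 < Dk s t M eta k0 pm) by (apply H1; unfold pm, e; lra).
  assert (Hb : Dk s t M eta k0 pp < 0) by (apply H2; unfold pp, e; lra).
  set (a := Dk s t M eta k0 pm) in *. set (b := - Dk s t M eta k0 pp).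
  pose proof (c3_pos s t M eta Hs Ht He) as Hc3.
  set (Ym := c3 s t M eta * Rpower pm (gg s t)). set (Yp := c3 s t M eta * Rpower pp (gg s t)).
  assert (HYm : 0 < Ym) by (unfold Ym; pose proof (rp_pos pm (gg s t)); nra).
  assert (HYp : 0 < Yp) by (unfold Yp; pose proof (rp_pos pp (gg s t)); nra).
  set (T := Ym + Yp).
  set (m := Rmin a b).
  assert (Hm : 0 < m) by (apply Rmin_pos; unfold b; lra).
  assert (Hm1 : m <= a) by apply Rmin_l. assert (Hm2 : m <= b) by apply Rmin_r.
  exists (Rmin d0 (m / T)). split.
  { apply Rmin_pos; auto. apply Rdiv_lt_0_compat; unfold T; lra. }
  intros k Hk'.
  assert (Hk1 := Rmin_l d0 (m / T)). assert (Hk2 := Rmin_r d0 (m / T)).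
  assert (Gk : good s t M eta k) by (apply Hgood; lra).
  pose proof (ps_crit _ _ _ _ _ Gk) as Ck. fold z.
  set (zk := ps s t M eta k) in *.
  apply Rabs_def2 in Hk'. destruct Hk' as [Hk'1 Hk'2].
  assert (HmT : m / T * T = m) by (field; unfold T; lra).
  assert (HDm : 0 < Dk s t M eta k pm).
  { rewrite (Dk_diff s t M eta k0 k). fold a.
    replace ((k - k0) * (eta * cc s * (gg s t + 1) / AA s M) * Rpower pm (gg s t)) with ((k - k0) * Ym)
      by (unfold Ym, c3; ring).
    assert (- (m/T*T) < (k - k0) * Ym < m/T*T).
    { apply small_prod; [split; unfold T; lra | unfold T; lra | apply Rdiv_lt_0_compat; unfold T; lra | split; lra]. }
    lra. }
  assert (HDp : Dk s t M eta k pp < 0).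
  { rewrite (Dk_diff s t M eta k0 k).
    replace ((k - k0) * (eta * cc s * (gg s t + 1) / AA s M) * Rpower pp (gg s t)) with ((k - k0) * Yp)
      by (unfold Yp, c3; ring).
    assert (- (m/T*T) < (k - k0) * Yp < m/T*T).
    { apply small_prod; [split; unfold T; lra | unfold T; lra | apply Rdiv_lt_0_compat; unfold T; lra | split; lra]. }
    unfold b in Hm2. lra. }
  destruct Ck as [[Hzk0 HzkP] [HDzk [Hk1' [Hk2' _]]]].
  assert (pm < zk).
  { destruct (Rtotal_order pm zk) as [h|[h|h]]; auto.
    rewrite h in HDm; lra. specialize (Hk2' pm ltac:(lra)). lra. }
  assert (zk < pp).
  { destruct (Rtotal_order pp zk) as [h|[h|h]].
    specialize (Hk1' pp ltac:(lra)). lra. rewrite h in HDp; lra. auto. }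
  apply Rabs_def1; unfold pm, pp, e in *; lra.
Qed.

Definition c2 s t eta := eta * cc s * (gg s t + 1).
Definition f1 s t M y := - AA s M + (1 + al s t) * Rpower y (al s t) + 0 * Rpower y (al s t).
Definition f2 s t eta y := 0 + c2 s t eta * Rpower y (gg s t) + 0 * Rpower y (gg s t).
Definition Gf s t M eta p := ((1 + al s t) * Rpower p (al s t) - AA s M) / (c2 s t eta * Rpower p (gg s t)).
Definition Gd s t M eta p :=
  (((1 + al s t) * (al s t * Rpower p (al s t - 1)) + 0 * (al s t * Rpower p (al s t - 1))) * f2 s t eta p
   - (c2 s t eta * (gg s t * Rpower p (gg s t - 1)) + 0 * (gg s t * Rpower p (gg s t - 1))) * f1 s t M p)
  / Rsqr (f2 s t eta p).

Lemma c2_pos s t eta : 0 < s < 1 -> 0 < t < 1 -> 0 < eta -> 0 < c2 s t eta.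
Proof.
  intros. unfold c2. pose proof (cc_pos s H). pose proof (gg_pos s t H H0).
  assert (0 < eta * cc s) by nra. nra.
Qed.

Lemma G_crit s t M eta k p : 0 < s < 1 -> 0 < t < 1 -> 0 < eta -> 0 < p ->
  Dk s t M eta k p = 0 -> Gf s t M eta p = k.
Proof.
  intros Hs Ht He Hp HD. unfold Gf.
  pose proof (c2_pos s t eta Hs Ht He). pose proof (rp_pos p (gg s t)). pose proof (AA_pos s M).
  replace ((1 + al s t) * Rpower p (al s t) - AA s M) with
    (k * (c2 s t eta * Rpower p (gg s t)) - AA s M * Dk s t M eta k p)
    by (unfold Dk, Dg, BB, c2; field; lra).
  rewrite HD. field. split; lra.
Qed.

Lemma G_der s t M eta p : 0 < s < 1 -> 0 < t < 1 -> 0 < eta -> 0 < p ->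
  derivable_pt_lim (Gf s t M eta) p (Gd s t M eta p).
Proof.
  intros Hs Ht He Hp.
  apply derivable_pt_lim_ext with (f := (f1 s t M / f2 s t eta)%F).
  { intros y. unfold div_fct, f1, f2, Gf. f_equal; ring. }
  unfold Gd. apply derivable_pt_lim_div.
  - unfold f1. apply dlin2; apply rp_deriv; auto.
  - unfold f2. apply dlin2; apply rp_deriv; auto.
  - unfold f2. pose proof (c2_pos s t eta Hs Ht He). pose proof (rp_pos p (gg s t)). nra.
Qed.

Lemma Gd_pos s t M eta k z : 0 < s < 1 -> 0 < t < 1 -> 0 < eta ->
  crit s t M eta k z -> 0 < Gd s t M eta z.
Proof.
  intros Hs Ht He [[Hz0 _] [HD [_ [_ HS]]]].
  pose proof (c2_pos s t eta Hs Ht He) as Hc2.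
  set (u := Rpower z (al s t - 1)). set (v := Rpower z (gg s t - 1)).
  set (a := Rpower z (al s t)). set (b := Rpower z (gg s t)). set (w := Rpower z (gg s t - al s t)).
  assert (Hub : u * b = a * v).
  { unfold u, b, a, v. rewrite <- !Rpower_plus. f_equal. ring. }
  assert (Hb : b = w * a).
  { unfold w, a, b. rewrite <- Rpower_plus. f_equal. ring. }
  assert (Hf1 : f1 s t M z = k * c2 s t eta * b).
  { pose proof (AA_pos s M).
    replace (f1 s t M z) with (k * (c2 s t eta * b) - AA s M * Dk s t M eta k z)
      by (unfold f1, Dk, Dg, BB, c2; fold a b; field; lra).
    rewrite HD. ring. }
  assert (Hf2 : f2 s t eta z = c2 s t eta * b) by (unfold f2; fold b; ring).
  assert (HSk : k * c2 s t eta * gg s t * w - (1 + al s t) * al s t < 0).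
  { unfold Sk, Sg, BB in HS. fold w in HS. unfold c2. lra. }
  unfold Gd. fold u v a b. rewrite Hf1, Hf2.
  assert (Ha : 0 < a) by apply rp_pos. assert (Hv : 0 < v) by apply rp_pos.
  assert (Hbp : 0 < b) by apply rp_pos.
  apply Rdiv_lt_0_compat.
  2:{ unfold Rsqr. assert (0 < c2 s t eta * b) by nra. nra. }
  replace (((1 + al s t) * (al s t * u) + 0 * (al s t * u)) * (c2 s t eta * b) -
    (c2 s t eta * (gg s t * v) + 0 * (gg s t * v)) * (k * c2 s t eta * b))
    with ((1 + al s t) * al s t * c2 s t eta * (u * b) - c2 s t eta * gg s t * v * k * c2 s t eta * b) by ring.
  rewrite Hub. rewrite Hb.
  replace ((1 + al s t) * al s t * c2 s t eta * (a * v) - c2 s t eta * gg s t * v * k * c2 s t eta * (w * a))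
    with (c2 s t eta * v * a * ((1 + al s t) * al s t - k * c2 s t eta * gg s t * w)) by ring.
  assert (0 < c2 s t eta * v) by nra. assert (0 < c2 s t eta * v * a) by nra. nra.
Qed.

Lemma ps_der s t M eta k0 d0 : good s t M eta k0 -> 0 < d0 ->
  (forall k, Rabs (k - k0) < d0 -> good s t M eta k) ->
  exists d, derivable_pt_lim (ps s t M eta) k0 d /\ 0 < d.
Proof.
  intros G0 Hd0 Hgood.
  assert (Hs : 0 < s < 1) by apply G0. assert (Ht : 0 < t < 1) by apply G0.
  assert (He : 0 < eta) by apply G0.
  set (lb := k0 - d0/2). set (ub := k0 + d0/2).
  assert (Glb : good s t M eta lb) by (apply Hgood; unfold lb; apply Rabs_def1; lra).
  assert (Gub : good s t M eta ub) by (apply Hgood; unfold ub; apply Rabs_def1; lra).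
  assert (Hlb0 : 0 < ps s t M eta lb) by (apply (ps_crit _ _ _ _ _ Glb)).
  assert (Prf : forall a, ps s t M eta lb <= a <= ps s t M eta ub -> derivable_pt (Gf s t M eta) a).
  { intros a Ha. exists (Gd s t M eta a). apply G_der; auto. lra. }
  assert (Prg := ps_cont s t M eta k0 d0 G0 Hd0 Hgood).
  assert (Hincr : ps s t M eta lb <= ps s t M eta k0 <= ps s t M eta ub).
  { split; apply ps_mono; auto; unfold lb, ub; lra. }
  assert (Hcomp : forall x, lb <= x <= ub -> comp (Gf s t M eta) (ps s t M eta) x = id x).
  { intros x Hx. assert (Gx : good s t M eta x) by (apply Hgood; apply Rabs_def1; unfold lb, ub in Hx; lra).
    unfold comp, id. pose proof (ps_crit _ _ _ _ _ Gx) as Cx.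
    apply (G_crit s t M eta x); auto. apply Cx. apply Cx. }
  pose proof (ps_crit _ _ _ _ _ G0) as C0.
  assert (HD : derive_pt (Gf s t M eta) (ps s t M eta k0) (Prf (ps s t M eta k0) Hincr)
     = Gd s t M eta (ps s t M eta k0)).
  { apply derive_pt_eq_0. apply G_der; auto. apply C0. }
  assert (HGd : 0 < Gd s t M eta (ps s t M eta k0)) by (eapply Gd_pos; eauto).
  pose proof (derivable_pt_lim_recip_interv (Gf s t M eta) (ps s t M eta) lb ub k0 Prf Prg
    ltac:(unfold lb, ub; lra) ltac:(unfold lb, ub; lra) Hincr Hcomp ltac:(rewrite HD; lra)) as Hder.
  rewrite HD in Hder. exists (1 / Gd s t M eta (ps s t M eta k0)). split; auto.
  apply Rdiv_lt_0_compat; lra.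
Qed.

Lemma good_region s t M eta k0 : good s t M eta k0 ->
  exists d0, 0 < d0 /\ forall k, Rabs (k - k0) < d0 -> good s t M eta k.
Proof.
  intros G0. pose proof G0 as [Hs [Ht [HM [He [Hk Hq]]]]].
  set (Q := eta * Rpower M (1 - t)).
  assert (HQ : 0 < Q) by (unfold Q; pose proof (rp_pos M (1-t)); nra).
  assert (HkQ : k0 * Q < 1) by (unfold Q; lra).
  assert (Hk0 : k0 < / Q).
  { apply (Rmult_lt_reg_r Q); auto. rewrite Rinv_l; lra. }
  exists (Rmin k0 (/Q - k0)). split. apply Rmin_pos; lra.
  intros k Hkk. apply Rabs_def2 in Hkk.
  assert (h1 := Rmin_l k0 (/Q - k0)). assert (h2 := Rmin_r k0 (/Q - k0)).
  repeat split; try lra.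
  replace (eta * k * Rpower M (1 - t)) with (k * Q) by (unfold Q; ring).
  assert (k < /Q) by lra.
  assert (k * Q < /Q * Q) by (apply Rmult_lt_compat_r; lra). rewrite Rinv_l in H0; lra.
Qed.

Theorem proposition1 (N C sigma theta M eta kavg kpeak : R)
  (hN : 0 < N) (hC : 0 < C)
  (hsigma : 0 < sigma < 1) (htheta : 0 < theta < 1) (hM : 0 < M)
  (heta : 0 < eta) (hkavg : 0 < kavg <= 1) (hkpeak : 0 < kpeak <= 1)
  (heta_small : eta < / (kavg * rpow M (1 - theta))) :
  (* (i) unimodality of R on [0, p_max) *)
  (exists v : R,
     (forall x y, 0 <= x -> x <= y -> y <= v -> y < pmax M theta ->
        revenue N sigma theta M eta kavg x <= revenue N sigma theta M eta kavg y) /\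
     (forall x y, 0 <= x -> v <= x -> x <= y -> y < pmax M theta ->
        revenue N sigma theta M eta kavg y <= revenue N sigma theta M eta kavg x)) /\
  (* (i) P is non-empty and connected *)
  (exists p, feasible N C sigma theta M eta kavg kpeak p) /\
  (forall x y z, feasible N C sigma theta M eta kavg kpeak x ->
     feasible N C sigma theta M eta kavg kpeak y -> x <= z -> z <= y ->
     feasible N C sigma theta M eta kavg kpeak z) /\
  (* p0 = inf P *)
  (forall p0 : R, is_glb (feasible N C sigma theta M eta kavg kpeak) p0 ->
    (* (ii) *)
    ((exists l, derivable_pt_lim (revenue N sigma theta M eta kavg) p0 l /\ l < 0) ->
       unique_equilibrium N C sigma theta M eta kavg kpeak p0 /\
       peak N sigma theta M kpeak p0 = C /\
       p0 = rpow M theta *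
            rpow (1 - C / (kpeak * N * meanPhi sigma M)) (theta / (2 - sigma))) /\
    (* (iii) *)
    ((exists l, derivable_pt_lim (revenue N sigma theta M eta kavg) p0 l /\ 0 < l) ->
       exists pstar : R,
         unique_equilibrium N C sigma theta M eta kavg kpeak pstar /\
         peak N sigma theta M kpeak pstar <> C /\
         0 < pstar < pmax M theta /\
         derivable_pt_lim (revenue N sigma theta M eta kavg) pstar 0 /\
         (forall q, 0 < q < pmax M theta ->
            derivable_pt_lim (revenue N sigma theta M eta kavg) q 0 -> q = pstar) /\
         (* p*(kappa_avg) as a function of kappa_avg: near kavg it is the
            unique critical point of R in (0, p_max), and its derivative at
            kavg is positive *)
         exists (ps : R -> R) (delta : R),
           0 < delta /\ ps kavg = pstar /\
           (forall k, Rabs (k - kavg) < delta ->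
              0 < ps k < pmax M theta /\
              derivable_pt_lim (revenue N sigma theta M eta k) (ps k) 0 /\
              (forall q, 0 < q < pmax M theta ->
                 derivable_pt_lim (revenue N sigma theta M eta k) q 0 -> q = ps k)) /\
           exists d, derivable_pt_lim ps kavg d /\ 0 < d)).
Proof.
  rewrite pmax_eq by auto.
  assert (Hk : 0 < kavg) by lra. assert (Hkp : 0 < kpeak) by lra.
  assert (Hq : eta * kavg * Rpower M (1 - theta) < 1).
  { rewrite rpow_pos in heta_small by auto.
    set (X := kavg * Rpower M (1 - theta)) in *.
    assert (0 < X) by (unfold X; pose proof (rp_pos M (1 - theta)); nra).
    assert (eta * X < / X * X) by (apply Rmult_lt_compat_r; auto).
    rewrite Rinv_l in H0 by lra. unfold X in H0. lra. }
  assert (G0 : good sigma theta M eta kavg) by (repeat split; lra).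
  destruct (core sigma theta M eta kavg) as [z Hz]; auto.
  assert (Hcritk : forall k q, good sigma theta M eta k -> 0 < q < PP theta M ->
     derivable_pt_lim (revenue N sigma theta M eta k) q 0 -> Dk sigma theta M eta k q = 0).
  { intros k q Gk Hq' Hd.
    pose proof (rev_der N sigma theta M eta k q hM ltac:(lra) hsigma Hq') as Hd'.
    pose proof (uniqueness_limite _ _ _ _ Hd Hd'). nra. }
  assert (Hcritd : forall k q, 0 < q < PP theta M -> Dk sigma theta M eta k q = 0 ->
     derivable_pt_lim (revenue N sigma theta M eta k) q 0).
  { intros k q Hq' HD. pose proof (rev_der N sigma theta M eta k q hM ltac:(lra) hsigma Hq') as Hd'.
    rewrite HD, Rmult_0_r in Hd'. auto. }
  split; [|split; [|split]].
  - exists z. split.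
    + intros x y Hx Hxy Hyz HyP. destruct (Req_dec x y) as [->|hne]; [lra|].
      destruct (Req_dec x 0) as [->|hx0].
      * apply Rlt_le. apply R3; auto; lra.
      * eapply rev_le_z; eauto; lra.
    + intros x y Hx Hzx Hxy HyP. eapply rev_ge_z; eauto; try lra.
  - eapply feas_ne; eauto.
  - intros x y w Hx Hy Hxw Hwy. apply (feas_conn N C sigma theta M eta kavg kpeak z x y w); auto.
  - intros p0 Hglb.
    destruct (glb_basic N C sigma theta M eta kavg kpeak z p0) as [Hp0 _]; auto.
    pose proof (rev_der N sigma theta M eta kavg p0 hM ltac:(lra) hsigma Hp0) as Hd0.
    split.
    + intros [l [Hl Hl0]]. pose proof (uniqueness_limite _ _ _ _ Hl Hd0) as E.
      eapply part_ii; eauto. nra.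
    + intros [l [Hl Hl0]]. pose proof (uniqueness_limite _ _ _ _ Hl Hd0) as E.
      assert (HD : 0 < Dk sigma theta M eta kavg p0) by nra.
      destruct (part_iii N C sigma theta M eta kavg kpeak z p0) as [Hu Hpk]; auto.
      exists z. split; auto. split; auto.
      assert (Hz0 : 0 < z < PP theta M) by apply Hz.
      split; auto. split. apply Hcritd; auto. apply Hz.
      split.
      { intros q Hq' Hd. apply (crit_uniq sigma theta M eta kavg z q Hz). lra.
        apply (Hcritk kavg q); auto. }
      destruct (good_region sigma theta M eta kavg G0) as [d0 [Hd0p Hgood]].
      exists (ps sigma theta M eta), d0. split; auto. split.
      { apply (crit_eq sigma theta M eta kavg). apply ps_crit; auto. auto. }
      split.
      * intros k Hkk. pose proof (Hgood k Hkk) as Gk. pose proof (ps_crit _ _ _ _ _ Gk) as Ck.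
        assert (Hc0 : 0 < ps sigma theta M eta k < PP theta M) by apply Ck.
        split; auto. split. apply Hcritd; auto. apply Ck.
        intros q Hq' Hd. apply (crit_uniq sigma theta M eta k _ q Ck). lra.
        apply (Hcritk k q); auto.
      * eapply ps_der; eauto.
Qed.
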